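(* Let $n$ be a positive integer, $k\ge 2$ an integer, and $\beta,\alpha_0,\alpha_1,\dots,\alpha_{n-1}$ non-negative integers with $0\le\beta\le k-1$. Then $$\det_{0\le i,j\le n-1}\bigl(C_{(k-1)\alpha_i+j+\beta,k}\bigr)=\prod_{0\le i<j\le n-1}(\alpha_j-\alpha_i)\prod_{i=0}^{n-1}\frac{((k-1)i+\beta+n)!\,(k\alpha_i+\beta)!}{(ki+\beta)!\,\alpha_i!\,((k-1)\alpha_i+\beta+n)!}.$$
   Context: For integers $k\ge2$ and $m\ge0$, the generalised Catalan number is $$C_{m,k}=\frac{m-(k-1)\lfloor\frac{m}{k-1}\rfloor+1}{m+\lfloor\frac{m}{k-1}\rfloor+1}\binom{m+\lfloor\frac{m}{k-1}\rfloor+1}{m+1}.$$ (Equivalently, $C_{m,k}$ is the number of lattice paths with unit steps $(1,0)$ and $(0,1)$ from $(0,0)$ to $(m,\lfloor m/(k-1)\rfloor)$ never passing above the line $x=(k-1)y$.) *)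

(* Defs.v *)
From mathcomp Require Import all_boot all_order all_algebra.
Set Implicit Arguments. Unset Strict Implicit. Unset Printing Implicit Defensive.
Import GRing.Theory Num.Theory.
Local Open Scope ring_scope.

(* Note m - (k-1) q >= 0, so the truncated nat subtraction is exact. *)
Definition gcat (m k : nat) : rat :=
  let q := (m %/ (k.-1))%N in
  ((m - k.-1 * q + 1)%N)%:R / ((m + q + 1)%N)%:R * ('C(m + q + 1, m + 1))%:R.

(* Main.v *)
Require Import Defs.
From mathcomp Require Import all_boot all_order all_algebra.
From mathcomp Require Import zify ring lra.
Set Implicit Arguments. Unset Strict Implicit. Unset Printing Implicit Defensive.
Import GRing.Theory Num.Theory.
Local Open Scope ring_scope.

Definition Sf (k b m : nat) := ((m + b) %/ k.-1)%N.
Definition tf (k b m : nat) := ((m + b) %% k.-1)%N.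
Definition df (k b m : nat) := (b + m + 1 + Sf k b m)%N.

Lemma Sf_eq k b m : (0 < k.-1)%N -> (m + b = Sf k b m * k.-1 + tf k b m /\ tf k b m < k.-1)%N.
Proof. move=> hK; split; [exact: divn_eq | exact: ltn_pmod]. Qed.

Lemma S_step k b j : (0 < k.-1)%N ->
  ((tf k b j).+1 < k.-1 /\ Sf k b j.+1 = Sf k b j /\ tf k b j.+1 = (tf k b j).+1)%N \/
  ((tf k b j).+1 = k.-1 /\ Sf k b j.+1 = (Sf k b j).+1 /\ tf k b j.+1 = 0)%N.
Proof.
move=> hK; have [e lt] := Sf_eq b j hK.
have E : (j.+1 + b = Sf k b j * k.-1 + (tf k b j).+1)%N by rewrite addSn e addnS.
rewrite /Sf /tf E.
case: (ltngtP (tf k b j).+1 k.-1) => h.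
- left; rewrite divnMDl // modnMDl divn_small // modn_small //; split => //; by rewrite addn0.
- by move: lt; rewrite ltnNge -ltnS h.
- right; rewrite h -mulSnr mulnK // modnMl; split=> //; by rewrite addn1.
Qed.

Lemma mset k b (F : nat -> rat) j : (1 < k)%N -> (b <= k.-1)%N ->
  \prod_(m < j) F (df k b m) * \prod_(i < Sf k b j) F (k * i.+1)%N
  = \prod_(l < j + Sf k b j) F (b + l + 1)%N.
Proof.
move=> hk hb; have hK : (0 < k.-1)%N by rewrite -ltnS prednK // ltnW.
have kK : k = (k.-1).+1 by rewrite prednK // ltnW.
elim: j => [|j IH].
  rewrite big_ord0 mul1r add0n /Sf add0n.
  case: (ltngtP b k.-1) => h.
  - by rewrite divn_small // !big_ord0.
  - by move: hb; rewrite leqNgt h.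
  - rewrite h divnn hK big_ord_recr big_ord0 big_ord_recr big_ord0 /= !mul1r; congr (F _); lia.
case: (S_step b j hK) => [[h1 [h2 h3]] | [h1 [h2 h3]]].
- rewrite h2 big_ord_recr /= -mulrA [F (df k b j) * _]mulrC mulrA IH addSn big_ord_recr /=.
  congr (_ * F _); rewrite /df; lia.
- rewrite h2 big_ord_recr /= big_ord_recr /= addSn addnS !big_ord_recr /=.
  rewrite mulrACA IH mulrA; congr (_ * F _ * F _).
  + rewrite /df; lia.
  + have [e _] := Sf_eq b j hK.
    move: e h1 kK; set S := Sf k b j; set t := tf k b j; set K := k.-1 => e h1 kK; rewrite kK; nia.
Qed.

Lemma fact_shift a N : ((a + N)`!)%:R = (a`!)%:R * \prod_(l < N) ((a + l + 1)%N%:R : rat).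
Proof.
elim: N => [|N IH]; first by rewrite addn0 big_ord0 mulr1.
by rewrite addnS factS natrM IH big_ord_recr /= addn1; ring.
Qed.

Lemma gcat_eq k m : gcat m k =
  ((m - k.-1 * (m %/ k.-1)).+1)%:R * ((m + m %/ k.-1)`!)%:R
   / (((m + 1)`!)%:R * ((m %/ k.-1)`!)%:R).
Proof.
rewrite /gcat; set q := (m %/ k.-1)%N; set t := (m - k.-1 * q)%N.
have hb := @bin_fact (m + q + 1) (m + 1) ltac:(by rewrite addnAC leq_addr).
have e1 : (m + q + 1 - (m + 1) = q)%N by lia.
rewrite e1 in hb.
have hf : ('C(m + q + 1, m + 1))%:R = ((m+q+1)`!)%:R / (((m+1)`!)%:R * (q`!)%:R) :> rat.
  rewrite -hb natrM natrM mulfK // mulf_neq0 // pnatr_eq0 -lt0n fact_gt0 //.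
rewrite hf !addn1 factS natrM.
have hN : ((m + q).+1)%:R != 0 :> rat by rewrite pnatr_eq0.
by rewrite -!mulrA mulKf.
Qed.

Definition Qv k b j (x : rat) := \prod_(m < j) (k%:R * x + (df k b m)%:R).
Definition Rv k b n j (x : rat) :=
  \prod_(l < n - j.+1) ((k.-1)%:R * x + (b + j + l + 2)%N%:R).
Definition cc k b j : rat := ((tf k b j).+1)%:R * (k ^ Sf k b j)%:R.
Definition gg k b n (a : nat) : rat :=
  ((k * a + b)`!)%:R / ((a`!)%:R * ((k.-1 * a + b + n)`!)%:R).

Lemma abstr (t A P B Pa C Pr Q kS : rat) : Pa != 0 -> Pr != 0 -> B != 0 -> C != 0 ->
  Q * (kS * Pa) = P ->
  t * (A * P) / (C * (B * Pa)) = A / (B * (C * Pr)) * (t * kS * Q * Pr).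
Proof. by move=> h1 h2 h3 h4 <-; field; rewrite h1 h2 h3 h4. Qed.

Lemma nz_fact n : (n`!)%:R != 0 :> rat.
Proof. by rewrite pnatr_eq0 -lt0n fact_gt0. Qed.

Lemma nz_prod N (f : nat -> nat) : (forall l, 0 < f l)%N -> \prod_(l < N) ((f l)%:R : rat) != 0.
Proof. by move=> h; rewrite prodf_seq_neq0; apply/allP => l _ /=; rewrite pnatr_eq0 -lt0n h. Qed.

Lemma entry k b n j a : (1 < k)%N -> (b <= k.-1)%N -> (j < n)%N ->
  gcat (k.-1 * a + j + b) k = gg k b n a * (cc k b j * Qv k b j a%:R * Rv k b n j a%:R).
Proof.
move=> hk hb hj; have hK : (0 < k.-1)%N by rewrite -ltnS prednK // ltnW.
have kK : k = (k.-1).+1 by rewrite prednK // ltnW.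
have [e lt] := Sf_eq b j hK.
have hq : ((k.-1 * a + j + b) %/ k.-1 = a + Sf k b j)%N by rewrite -addnA mulnC divnMDl.
have ht : (k.-1 * a + j + b - k.-1 * (a + Sf k b j) = tf k b j)%N.
  rewrite -addnA e mulnDr [(Sf k b j * _)%N]mulnC; lia.
rewrite gcat_eq hq ht.
have hX : ((k.-1 * a + j + b + (a + Sf k b j))`!)%:R
   = ((k*a+b)`!)%:R * \prod_(l < j + Sf k b j) ((k*a+b + l + 1)%N%:R : rat).
  rewrite -fact_shift; congr ((_`!)%:R); rewrite kK mulSn; lia.
have hY := fact_shift a (Sf k b j).
have hZ : ((k.-1 * a + b + n)`!)%:R = ((k.-1 * a + j + b + 1)`!)%:R * Rv k b n j a%:R.
  have -> : (k.-1 * a + b + n = (k.-1 * a + j + b + 1) + (n - j.+1))%N by lia.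
  rewrite fact_shift; congr (_ * _); apply: eq_bigr => l _.
  rewrite -natrM -natrD; congr (_%:R); lia.
have hQ := @mset k b (fun v => ((k*a + v)%N)%:R : rat) j hk hb.
have hQ1 : \prod_(m < j) ((fun v => ((k*a + v)%N)%:R : rat) (df k b m)) = Qv k b j a%:R.
  by apply: eq_bigr => m _; rewrite natrD natrM.
have hQ2 : \prod_(i < Sf k b j) ((fun v => ((k*a + v)%N)%:R : rat) (k * i.+1)%N)
    = (k ^ Sf k b j)%:R * \prod_(l < Sf k b j) ((a + l + 1)%N%:R : rat).
  have -> : ((k ^ Sf k b j)%:R : rat) = \prod_(i < Sf k b j) (k%:R : rat) by rewrite prodr_const card_ord natrX.
  rewrite -big_split /=.
  by apply: eq_bigr => i _; rewrite -natrM; congr (_%:R); rewrite -mulnDr addn1 addnS.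
have hQ3 : \prod_(l < j + Sf k b j) ((fun v => ((k*a + v)%N)%:R : rat) (b + l + 1)%N)
    = \prod_(l < j + Sf k b j) ((k*a+b + l + 1)%N%:R : rat).
  by apply: eq_bigr => l _; rewrite !addnA.
rewrite hQ1 hQ2 hQ3 in hQ.
rewrite hX hY /gg hZ /cc.
apply: abstr => //; try exact: nz_fact.
- by apply: (@nz_prod _ (fun l => (a + l + 1)%N)) => l; rewrite addn1.
- rewrite /Rv prodf_seq_neq0; apply/allP => l _ /=.
  by rewrite -natrM -natrD pnatr_eq0 addn2 !addnS.
Qed.

Lemma det_poly n (P : 'I_n -> {poly rat}) (x : 'I_n -> rat) :
  (forall j, (size (P j) <= n)%N) ->
  \det (\matrix_(i < n, j < n) (P j).[x i])
  = (\prod_(i < n) \prod_(j < n | (i < j)%N) (x j - x i))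
    * \det (\matrix_(l < n, j < n) (P j)`_l).
Proof.
move=> hs.
have -> : \matrix_(i < n, j < n) (P j).[x i]
   = (Vandermonde n (\row_i x i))^T *m \matrix_(l < n, j < n) (P j)`_l.
  apply/matrixP => i j; rewrite !mxE (horner_coef_wide _ (hs j)).
  by apply: eq_bigr => l _; rewrite !mxE mulrC.
by rewrite det_mulmx det_tr det_Vandermonde; congr (_ * _);
   apply: eq_bigr => i _; apply: eq_bigr => j _; rewrite !mxE.
Qed.

Lemma size_lin_prod N (f g : nat -> rat) :
  (size (\prod_(l < N) ((f l)%:P * 'X + (g l)%:P))%R <= N.+1)%N.
Proof.
elim: N => [|N IH]; first by rewrite big_ord0 size_poly1.
rewrite big_ord_recr /=; apply: leq_trans (size_mul_leq _ _) _.
rewrite size_MXaddC; case: ifP => _; first by rewrite addn0 (leq_trans (leq_pred _)) // (leq_trans IH).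
rewrite addnS /= -addn1; exact: leq_add IH (size_polyC_leq1 _).
Qed.

Definition Pp k b n j : {poly rat} :=
  (cc k b j)%:P * \prod_(m < j) ((k%:R)%:P * 'X + ((df k b m)%:R)%:P)
  * \prod_(l < n - j.+1) (((k.-1)%:R)%:P * 'X + ((b + j + l + 2)%N%:R)%:P).

Lemma Pp_horner k b n j x : (Pp k b n j).[x] = cc k b j * Qv k b j x * Rv k b n j x.
Proof.
rewrite /Pp !hornerM hornerC !horner_prod /Qv /Rv; congr (_ * _ * _);
  apply: eq_bigr => i _; by rewrite hornerMXaddC hornerC mulrC.
Qed.

Lemma Pp_size k b n j : (j < n)%N -> (size (Pp k b n j) <= n)%N.
Proof.
move=> hj; rewrite /Pp.
apply: leq_trans (size_mul_leq _ _) _.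
have h1 := size_lin_prod j (fun=> k%:R) (fun m => (df k b m)%:R).
have h2 := size_lin_prod (n - j.+1) (fun=> (k.-1)%:R) (fun l => (b + j + l + 2)%N%:R).
have h3 := size_polyC_leq1 (cc k b j).
have h4 := size_mul_leq (cc k b j)%:P (\prod_(m < j) ((k%:R)%:P * 'X + ((df k b m)%:R)%:P)).
simpl in h1, h2.
have hA : (size ((cc k b j)%:P * \prod_(m < j) ((k%:R)%:P * 'X + ((df k b m)%:R)%:P))%R <= j.+1)%N.
  apply: (leq_trans h4); rewrite -subn1 leq_subLR; exact: leq_add h3 h1.
rewrite -subn1 leq_subLR; apply: leq_trans (leq_add hA h2) _; lia.
Qed.

Lemma prod_split_last n (F : nat -> nat -> rat) :
  \prod_(i < n.+1) \prod_(l < n.+1 - i.+1) F i l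
  = \prod_(i < n) (\prod_(l < n - i.+1) F i l) * \prod_(i < n) F i (n - i.+1)%N.
Proof.
rewrite big_ord_recr /= subnn big_ord0 mulr1 -big_split /=.
apply: eq_bigr => i _.
have -> : (n.+1 - i.+1 = (n - i.+1).+1)%N by have := ltn_ord i; lia.
by rewrite big_ord_recr.
Qed.

Lemma exch n (f : nat -> nat -> rat) :
  \prod_(i < n) \prod_(m < i) f m i = \prod_(m < n) \prod_(l < n - m.+1) f m (m.+1 + l)%N.
Proof.
elim: n => [|n IH]; first by rewrite !big_ord0.
rewrite (prod_split_last n (fun m l => f m (m.+1 + l)%N)) big_ord_recr /= IH; congr (_ * _).
apply: eq_bigr => i _; congr (f _ _); have := ltn_ord i; lia.
Qed.

Lemma reidx n i (F : nat -> rat) :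
  \prod_(j < n | (i < j)%N) F j = \prod_(l < n - i.+1) F (i.+1 + l)%N.
Proof.
elim: n => [|n IH]; first by rewrite !big_ord0.
rewrite big_mkcond big_ord_recr /= -big_mkcond /= IH.
case: (ltnP i n) => h.
- have -> : (n.+1 - i.+1 = (n - i.+1).+1)%N by lia.
  rewrite big_ord_recr /=; congr (_ * F _); lia.
- have -> : (n.+1 - i.+1 = 0)%N by lia.
  have -> : (n - i.+1 = 0)%N by lia.
  by rewrite mulr1.
Qed.

Lemma abstr2 (P kS A A' B1 G0 GS : rat) : A' != 0 -> P * (kS * A') = B1 * A ->
  A * G0 = GS * A' -> G0 * kS * P = GS * B1.
Proof.
move=> hA' hm hG; apply: (mulIf hA').
transitivity (G0 * (P * (kS * A'))); first ring.
rewrite hm; transitivity (B1 * (A * G0)); first ring.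
rewrite hG; ring.
Qed.

Lemma step k b n : (1 < k)%N -> (b <= k.-1)%N ->
  cc k b n * \prod_(i < n) ((k * (b + n + 1))%N%:R - (k.-1 * df k b i)%N%:R)
  = (k * n + b + 1)%N%:R * \prod_(i < n) ((k.-1 * i + b + n + 1)%N%:R : rat).
Proof.
move=> hk hb; have hK : (0 < k.-1)%N by rewrite -ltnS prednK // ltnW.
have kK : k = (k.-1).+1 by rewrite prednK // ltnW.
have [e lt] := Sf_eq b n hK.
have hm := @mset k b (fun v => (k * (b + n + 1))%N%:R - (k.-1 * v)%N%:R) n hk hb.
move: hm e lt kK; rewrite /cc.
set S := Sf k b n; set t := tf k b n; set K := k.-1 => hm e lt kK.
pose G s := ((K * s + t + 1)%N%:R : rat).
have hF1 : \prod_(i < S) ((k * (b + n + 1))%N%:R - (K * (k * i.+1))%N%:R)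
   = (k ^ S)%:R * \prod_(i < S) G (S - i.+1)%N.
  have -> : ((k ^ S)%:R : rat) = \prod_(i < S) (k%:R : rat) by rewrite prodr_const card_ord natrX.
  rewrite -big_split /=; apply: eq_bigr => i _.
  have [r hr] : exists r, S = (i.+1 + r)%N by exists (S - i.+1)%N; have := ltn_ord i; lia.
  have -> : (S - i.+1 = r)%N by lia.
  have E : (k * (b + n + 1) = K * (k * i.+1) + k * (K * r + t + 1))%N.
    rewrite kK; nia.
  by rewrite E natrD addrC addKr -natrM.
have hF2 : \prod_(l < n + S) ((k * (b + n + 1))%N%:R - (K * (b + l + 1))%N%:R)
   = \prod_(l < n) ((b + n + 1 + K * (n - l.+1).+1)%N%:R : rat) * \prod_(r < S) G (S - r)%N.
  rewrite big_split_ord /=; congr (_ * _); apply: eq_bigr => l _.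
  - have [s hs] : exists s, n = (l.+1 + s)%N by exists (n - l.+1)%N; have := ltn_ord l; lia.
    have E : (k * (b + n + 1) = K * (b + l + 1) + (b + n + 1 + K * (n - l.+1).+1))%N.
      have -> : (n - l.+1 = s)%N by lia. rewrite kK; nia.
    by rewrite E natrD addrC addKr.
  - have [r hr] : exists r, S = (l.+1 + r)%N by exists (S - l.+1)%N; have := ltn_ord l; lia.
    have -> : (S - l = r.+1)%N by lia.
    have E : (k * (b + n + 1) = K * (b + (n + l) + 1) + (K * r.+1 + t + 1))%N.
      rewrite kK; nia.
    by rewrite E natrD addrC addKr.
rewrite /= in hm; rewrite hF1 hF2 in hm.
have hG : \prod_(r < S) G (S - r)%N * G 0%N = G S * \prod_(i < S) G (S - i.+1)%N.
  transitivity (\prod_(r < S.+1) G (S - r)%N).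
    by rewrite big_ord_recr /= subnn.
  by rewrite big_ord_recl /= subn0.
have hR : ((k * n + b + 1)%N%:R : rat) * \prod_(i < n) (K * i + b + n + 1)%N%:R
   = (b + n + 1)%N%:R * \prod_(i < n) ((b + n + 1 + K * i.+1)%N%:R : rat).
  transitivity (\prod_(i < n.+1) ((K * i + b + n + 1)%N%:R : rat)).
    by rewrite big_ord_recr /= mulrC; congr (_ * _%:R); rewrite kK; lia.
  rewrite big_ord_recl /=; congr (_%:R * _); first lia.
  by apply: eq_bigr => i _; congr (_%:R); rewrite /bump /=; lia.
have hB : \prod_(l < n) ((b + n + 1 + K * (n - l.+1).+1)%N%:R : rat)
   = \prod_(i < n) ((b + n + 1 + K * i.+1)%N%:R : rat).
  by rewrite -(big_mkord xpredT (fun i => ((b + n + 1 + K * i.+1)%N%:R : rat))) big_rev_mkord subn0.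
rewrite hR -hB.
have hA' : \prod_(i < S) G (S - i.+1)%N != 0.
  by rewrite prodf_seq_neq0; apply/allP => i _ /=; rewrite /G pnatr_eq0 addn1.
have hG0 : G 0%N = (t.+1)%:R by rewrite /G muln0 add0n addn1.
have hGS : G S = (b + n + 1)%N%:R by rewrite /G; congr (_%:R); lia.
rewrite -hG0 -hGS in hG *.
exact: abstr2 hA' hm hG.
Qed.

Definition T k b i l : rat := (k * (b + i + l + 2))%N%:R - (k.-1 * df k b i)%N%:R.
Definition Kc k b n := \prod_(i < n) (cc k b i * \prod_(l < n - i.+1) T k b i l).

Lemma Kc_val k b n : (1 < k)%N -> (b <= k.-1)%N ->
  Kc k b n = \prod_(i < n) (((k.-1 * i + b + n)`!)%:R / ((k * i + b)`!)%:R).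
Proof.
move=> hk hb; have kK : k = (k.-1).+1 by rewrite prednK // ltnW.
elim: n => [|n IH]; first by rewrite /Kc !big_ord0.
rewrite /Kc big_split /= (prod_split_last n (T k b)) big_ord_recr /= mulrACA -big_split /=.
rewrite -/(Kc k b n) IH.
have -> : \prod_(i < n) T k b i (n - i.+1)%N
   = \prod_(i < n) ((k * (b + n + 1))%N%:R - (k.-1 * df k b i)%N%:R).
  apply: eq_bigr => i _; rewrite /T; congr ((k * _)%N%:R - _); have := ltn_ord i; lia.
rewrite step // big_ord_recr /= mulrCA mulrC -big_split /=; congr (_ * _).
- by apply: eq_bigr => i _; rewrite addn1 addnS factS natrM; ring.
- have -> : (k.-1 * n + b + n.+1 = (k * n + b).+1)%N by rewrite kK; lia.
  rewrite factS natrM mulfK ?nz_fact //; congr (_%:R); lia.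
Qed.

Definition z k b i : rat := - (df k b i)%:R / k%:R.

Lemma kz k b i : (1 < k)%N -> k%:R * z k b i = - (df k b i)%:R.
Proof.
move=> hk; rewrite /z mulrC divfK // pnatr_eq0 -lt0n ltnW //.
Qed.

Lemma Pp_lower k b n i j : (1 < k)%N -> (i < j)%N -> (Pp k b n j).[z k b i] = 0.
Proof.
move=> hk hij; rewrite Pp_horner /Qv (bigD1 (Ordinal hij)) //= kz // addNr.
by rewrite mul0r mulr0 mul0r.
Qed.

Lemma Pp_diag k b n : (1 < k)%N ->
  \prod_(i < n) (Pp k b n i).[z k b i]
  = (\prod_(i < n) \prod_(j < n | (i < j)%N) (z k b j - z k b i)) * Kc k b n.
Proof.
move=> hk.
have E1 : \prod_(i < n) (Pp k b n i).[z k b i]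
   = \prod_(i < n) cc k b i * \prod_(i < n) Qv k b i (z k b i)
     * \prod_(i < n) Rv k b n i (z k b i).
  by rewrite -!big_split; apply: eq_bigr => i _; rewrite Pp_horner.
have E2 : \prod_(i < n) Qv k b i (z k b i)
   = \prod_(i < n) \prod_(l < n - i.+1) (k%:R * (z k b (i.+1 + l)%N - z k b i)).
  have := exch n (fun m i => k%:R * z k b i + (df k b m)%:R); rewrite /= /Qv => ->.
  apply: eq_bigr => i _; apply: eq_bigr => l _; by rewrite mulrBr (kz _ i hk) opprK.
have E3 : Kc k b n = \prod_(i < n) cc k b i *
   \prod_(i < n) \prod_(l < n - i.+1)
       (k%:R * ((k.-1)%:R * z k b i + (b + i + l + 2)%N%:R)).
  rewrite /Kc -big_split; apply: eq_bigr => i _; congr (_ * _).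
  apply: eq_bigr => l _; rewrite /T mulrDr mulrCA kz // natrM natrM mulrN; ring.
have E4 : \prod_(i < n) \prod_(j < n | (i < j)%N) (z k b j - z k b i)
   = \prod_(i < n) \prod_(l < n - i.+1) (z k b (i.+1 + l)%N - z k b i).
  by apply: eq_bigr => i _; rewrite (reidx n i (fun j => z k b j - z k b i)).
have key : \prod_(i < n) \prod_(l < n - i.+1) (k%:R * (z k b (i.+1 + l)%N - z k b i))
   * \prod_(i < n) Rv k b n i (z k b i)
   = \prod_(i < n) \prod_(l < n - i.+1) (z k b (i.+1 + l)%N - z k b i)
   * \prod_(i < n) \prod_(l < n - i.+1)
       (k%:R * ((k.-1)%:R * z k b i + (b + i + l + 2)%N%:R)).
  rewrite -!big_split; apply: eq_bigr => i _; rewrite /Rv -!big_split.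
  apply: eq_bigr => l _ /=; ring.
rewrite E1 E2 E3 E4 -mulrA key; ring.
Qed.

Lemma df_lt k b i j : (1 < k)%N -> (i < j)%N -> (df k b i < df k b j)%N.
Proof.
move=> hk hij; rewrite /df /Sf.
have := @leq_div2r k.-1 (i + b) (j + b) ltac:(lia). lia.
Qed.

Theorem theorem6 (n k beta : nat) (alpha : 'I_n -> nat)
  (hn : (0 < n)%N) (hk : (2 <= k)%N) (hbeta : (beta <= k - 1)%N) :
  \det (\matrix_(i < n, j < n) gcat ((k - 1) * alpha i + j + beta) k)
  = (\prod_(i < n) \prod_(j < n | (i < j)%N)
        ((alpha j)%:R - (alpha i)%:R : rat))
    * \prod_(i < n)
        ((((k - 1) * i + beta + n)`!)%:R * ((k * alpha i + beta)`!)%:R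
         / (((k * i + beta)`!)%:R * ((alpha i)`!)%:R
            * (((k - 1) * alpha i + beta + n)`!)%:R)).
Proof.
rewrite !subn1 in hbeta *.
have hk1 : (1 < k)%N by [].
have hsz : forall j : 'I_n, (size (Pp k beta n j) <= n)%N by move=> j; apply: Pp_size.
have -> : \matrix_(i < n, j < n) gcat (k.-1 * alpha i + j + beta) k
   = diag_mx (\row_i gg k beta n (alpha i))
     *m \matrix_(i < n, j < n) (Pp k beta n j).[(alpha i)%:R].
  by apply/matrixP => i j; rewrite mul_diag_mx !mxE (@entry k beta n j (alpha i)) // Pp_horner.
rewrite det_mulmx det_diag (@det_poly n (fun j => Pp k beta n j) (fun i => (alpha i)%:R) hsz).
have hz := @det_poly n (fun j => Pp k beta n j) (fun i => z k beta i) hsz.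
have htr : \det (\matrix_(i < n, j < n) (Pp k beta n j).[z k beta i])
    = \prod_(i < n) (Pp k beta n i).[z k beta i].
  rewrite det_trig; first by apply: eq_bigr => i _; rewrite mxE.
  by apply/is_trig_mxP => i j hij; rewrite mxE Pp_lower.
rewrite htr Pp_diag // in hz.
have hV : \prod_(i < n) \prod_(j < n | (i < j)%N) (z k beta j - z k beta i) != 0.
  rewrite prodf_seq_neq0; apply/allP => i _ /=.
  rewrite prodf_seq_neq0; apply/allP => j _ /=; apply/implyP => hij.
  rewrite subr_eq0 /z; apply/negP => /eqP H.
  have : ((df k beta j)%:R : rat) = (df k beta i)%:R.
    have hk0 : (k%:R : rat) != 0 by rewrite pnatr_eq0 -lt0n ltnW.
    by move: H => /(congr1 (fun x => - (x * k%:R))); rewrite !divfK // !opprK.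
  move/eqP; rewrite eqr_nat => /eqP E.
  by have := df_lt beta hk1 hij; rewrite E ltnn.
have hC := mulfI hV hz.
rewrite -hC Kc_val //.
rewrite mulrCA -big_split /=; congr (_ * _); apply: eq_bigr => i _.
rewrite mxE /gg !invfM; ring.
Qed.
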